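(* Let $P\in\mathfrak N^{Seg}_2$ with $h_P\ge2$ and $P(0)\cup P(1)$ of type $3C$. Then $P$ has a retract $R$ with $R(0)\cup R(1)$ a 4-crown if and only if $P(2\to h_P)$ has a retract $T$ whose set of minimal elements $T(0)$ is a 2-element antichain.
   Context: All posets are finite; $h_P$ is the height; level sets $P(0)=\min P$, $P(k+1)=\min(P\setminus\bigcup_{i\le k}P(i))$; $P(k\to\ell)=\bigcup_{i=k}^\ell P(i)$ as induced subposet. Level sets of a retract refer to its own levels. A retract is the image of an idempotent order-preserving self-map. A 4-crown is the ordinal sum of two 2-element antichains; type $3C$ means three disjoint 2-element chains with no further comparabilities; a 6-crown is $x_0<y_0>x_1<y_1>x_2<y_2>x_0$ with no other comparabilities. A section of width three is a poset $P$ of height $h_P\ge1$ with carrier $\{c_{k,j}:k\in[0,h_P],j\in\{0,1,2\}\}$ such that: $c_{0,j}<\dots<c_{h_P,j}$ for each $j$; each $\{c_{k,0},c_{k,1},c_{k,2}\}$ is an antichain; $c_{k,i}<c_{\ell,j}\Rightarrow c_{k,i+1}<c_{\ell,j+1}$ (indices mod 3); and for no $k$ is every point of $P(k)$ below every point of $P(k+1)$. It is nice if for all $x<y$: $\{z:z>x\}\not\subseteq\{z:z\ge y\}$ and $\{z:z<y\}\not\subseteq\{z:z\le x\}$. $\mathfrak N_2$ is the class of nice sections of width three of height $\ge2$ with horizon 2 (every point of $P(k)$ is below every point of $P(\ell)$ whenever $\ell\ge k+2$). $\mathfrak N^{Seg}_2=\{P(1\to h_P-1):P\in\mathfrak N_2\}$.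 *)

(* Defs.v *)
From mathcomp Require Import all_boot.
Set Implicit Arguments. Unset Strict Implicit. Unset Printing Implicit Defensive.

(* A finite poset is a finType T with a boolean order relation [le];
   subposets are subsets [S : {set T}] with the induced order. *)
Section Posets.
Variables (T : finType) (le : rel T).

Definition is_poset : Prop :=
  [/\ reflexive le, antisymmetric le & transitive le].

Definition lt (x y : T) : bool := (x != y) && le x y.

Definition minset (S : {set T}) : {set T} :=
  [set x in S | [forall y in S, ~~ lt y x]].

Fixpoint rest (S : {set T}) (k : nat) : {set T} :=
  match k with
  | 0 => S
  | k'.+1 => rest S k' :\: minset (rest S k')
  end.

Definition level (S : {set T}) (k : nat) : {set T} := minset (rest S k).

(* height h_S : the largest k with S(k) nonempty (levels are empty beyond #|T|) *)
Definition height (S : {set T}) : nat :=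
  \max_(k < #|T| | level S k != set0) (k : nat).

Definition segment (S : {set T}) (k l : nat) : {set T} :=
  \bigcup_(k <= i < l.+1) level S i.

Definition is_retract (S R : {set T}) : Prop :=
  exists f : T -> T,
    [/\ {in S, forall x, f x \in S},
        {in S &, forall x y, le x y -> le (f x) (f y)},
        {in S, forall x, f (f x) = f x} &
        R = f @: S].

Definition crown4 (A : {set T}) : Prop :=
  exists a0 a1 b0 b1 : T,
    [/\ uniq [:: a0; a1; b0; b1],
        A = [set a0; a1; b0; b1] &
        {in A &, forall x y, lt x y = (x \in [set a0; a1]) && (y \in [set b0; b1])}].

Definition type3C (A : {set T}) : Prop :=
  exists a0 b0 a1 b1 a2 b2 : T,
    [/\ uniq [:: a0; b0; a1; b1; a2; b2],
        A = [set a0; b0; a1; b1; a2; b2] &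
        {in A &, forall x y,
           lt x y = [|| (x == a0) && (y == b0), (x == a1) && (y == b1)
                      | (x == a2) && (y == b2)]}].

Definition antichain2 (A : {set T}) : Prop :=
  exists a b : T, [/\ a != b, A = [set a; b], ~~ le a b & ~~ le b a].

Definition nice : Prop :=
  forall x y : T, lt x y ->
    (exists z, lt x z && ~~ le y z) /\ (exists z, lt z y && ~~ le z x).

Definition horizon2 : Prop :=
  forall k l : nat, k.+2 <= l ->
    {in level setT k & level setT l, forall x y, lt x y}.

End Posets.

(* Carrier of a section of width three of height h: c_{k,j} = (k, j) *)
Definition sec_carrier (h : nat) : finType := ('I_h.+1 * 'I_3)%type.

Definition is_section3 (h : nat) (le : rel (sec_carrier h)) : Prop :=
  [/\ is_poset le, 1 <= h & height le setT = h] /\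
  [/\
      (forall (j : 'I_3) (k k' : 'I_h.+1), k < k' -> lt le (k, j) (k', j)),
      (forall (k : 'I_h.+1) (i j : 'I_3), i != j -> ~~ le (k, i) (k, j)),
      (forall (k l : 'I_h.+1) (i j : 'I_3),
          lt le (k, i) (l, j) -> lt le (k, ordS i) (l, ordS j)) &
      (forall k : nat, k < h ->
          ~ {in level le setT k & level le setT k.+1, forall x y, lt le x y})].

Definition in_N2 (h : nat) (le : rel (sec_carrier h)) : Prop :=
  [/\ is_section3 le, nice le, 2 <= h & horizon2 le].

(* Main.v *)
Require Import Defs.
From mathcomp Require Import all_boot.
Set Implicit Arguments. Unset Strict Implicit. Unset Printing Implicit Defensive.

Section Gen.
Variables (T : finType) (le : rel T).
Hypothesis Hpo : is_poset le.
Implicit Types S U : {set T}.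

Lemma le_refl x : le x x. Proof. by case: Hpo. Qed.
Lemma le_trans x y z : le x y -> le y z -> le x z.
Proof using Hpo. by case: Hpo => _ _ t; apply: t. Qed.
Lemma le_anti x y : le x y -> le y x -> x = y.
Proof using Hpo. by case: Hpo => _ a _ h1 h2; apply: a; rewrite h1 h2. Qed.

Lemma ltW x y : lt le x y -> le x y. Proof. by case/andP. Qed.
Lemma lt_irr x : lt le x x = false. Proof. by rewrite /lt eqxx. Qed.
Lemma lt_def x y : lt le x y = (x != y) && le x y. Proof. by []. Qed.

Lemma in_minset (S : {set T}) x : (x \in Defs.minset le S) = (x \in S) && [forall y in S, ~~ lt le y x].
Proof using Hpo. by rewrite /Defs.minset inE. Qed.

Lemma minsP S x : reflect (x \in S /\ forall y, y \in S -> ~~ lt le y x) (x \in Defs.minset le S).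
Proof using Hpo.
rewrite in_minset; apply: (iffP andP) => [[xS /forall_inP H]|[xS H]]; split => //.
by apply/forall_inP.
Qed.

Lemma minset_sub (S : {set T}) : Defs.minset le S \subset S.
Proof using Hpo. by apply/subsetP => x /minsP[]. Qed.

Lemma below_min (S : {set T}) x : x \in S -> exists2 y, y \in Defs.minset le S & le y x.
Proof using Hpo.
move=> xS; move: {2}#|_| (leqnn #|[set y in S | lt le y x]|) => n.
elim: n x xS => [|n IH] x xS Hn.
  exists x => //; last exact: le_refl.
  apply/minsP; split => // y yS; apply/negP => lyx.
  have : y \in [set y in S | lt le y x] by rewrite inE yS.
  by move: Hn; rewrite leqn0 => /eqP/cards0_eq ->; rewrite inE.
case: (boolP (x \in Defs.minset le S)) => [xm|xnm]; first by exists x => //; exact: le_refl.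
have [y yS lyx] : exists2 y, y \in S & lt le y x.
  move/minsP: xnm => H; apply/exists_inP; apply/negP => /exists_inP Hn'; apply: H.
  split => // y yS; apply/negP => l; apply: Hn'; by exists y.
suff Hc : #|[set z in S | lt le z y]| <= n.
  by have [z zm lzy] := IH y yS Hc; exists z => //; apply: le_trans lzy (ltW lyx).
rewrite -ltnS; apply: leq_trans Hn; apply: proper_card; apply/properP; split.
  apply/subsetP => z; rewrite !inE => /andP[-> lzy] /=.
  move: lzy lyx; rewrite /lt => /andP[nzy lzy] /andP[nyx lyx']; rewrite (le_trans lzy lyx') andbT.
  apply/negP => /eqP e; subst z; move/negP: nyx; apply; apply/eqP; exact: le_anti.
by exists y; rewrite !inE ?yS ?lyx ?lt_irr.
Qed.

Lemma rest_sub (S : {set T}) k : rest le S k \subset S.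
Proof using Hpo.
elim: k => [|k IH] /=; first exact: subxx.
by apply: subset_trans IH; apply: subsetDl.
Qed.

Lemma rest_decr (S : {set T}) j k : j <= k -> rest le S k \subset rest le S j.
Proof using Hpo.
move=> /subnKC <-; elim: (k - j) => [|n IH]; first by rewrite addn0 subxx.
by rewrite addnS /=; apply: subset_trans IH; apply: subsetDl.
Qed.

Lemma level_rest (S : {set T}) k : level le S k \subset rest le S k.
Proof using Hpo. exact: minset_sub. Qed.

Lemma level_S S k x : x \in level le S k -> x \in S.
Proof using Hpo. move=> h; exact: (subsetP (rest_sub S k)) _ (subsetP (level_rest S k) _ h). Qed.

Lemma level_uniq (S : {set T}) j k x : x \in level le S j -> x \in level le S k -> j = k.
Proof using Hpo.
wlog jk : j k / j <= k.
  by move=> W h1 h2; case: (leqP j k) => jk; [|apply/esym]; apply: W => //; apply: ltnW.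
move=> hj hk; case: (ltngtP j k) => [jk'|kj|//]; last by rewrite ltnNge jk in kj.
exfalso.
have : x \in rest le S j.+1 by apply: (subsetP (rest_decr S jk')); apply: (subsetP (level_rest _ _)).
by rewrite /= inE hj.
Qed.

Lemma rest_card (S : {set T}) k x : x \in rest le S k -> k + #|rest le S k| <= #|S|.
Proof using Hpo.
elim: k x => [|k IH] x /=; first by rewrite add0n.
rewrite inE => /andP[_ xr]; have := IH _ xr.
have [y ym _] := below_min xr.
have : #|rest le S k :\: Defs.minset le (rest le S k)| < #|rest le S k|.
  apply: proper_card; apply/properP; split; first exact: subsetDl.
  by exists y; [apply: (subsetP (minset_sub _)) | rewrite inE ym].
move=> h1 h2; rewrite addSn; apply: leq_trans h2; by rewrite ltn_add2l.
Qed.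

Lemma rest_lt (S : {set T}) k x : x \in rest le S k -> k < #|T|.
Proof using Hpo.
move=> xr; have := rest_card xr; have : 0 < #|rest le S k| by apply/card_gt0P; exists x.
move=> h1 h2; apply: leq_trans (max_card S); apply: leq_trans h2; by rewrite -addn1 leq_add2l.
Qed.

Lemma level_ex (S : {set T}) x : x \in S -> exists k, x \in level le S k.
Proof using Hpo.
move=> xS.
suff : forall n, x \in rest le S n \/ exists2 k, k < n & x \in level le S k.
  case/(_ #|T|) => [/rest_lt|[k _ h]]; [by rewrite ltnn | by exists k].
elim => [|n [xr|[k kn h]]]; first by left.
- case: (boolP (x \in Defs.minset le (rest le S n))) => xm; first by right; exists n.
  by left; rewrite /= inE xm xr.
- by right; exists k => //; apply: ltnW.
Qed.

Lemma level_lt (S : {set T}) j k x y : lt le y x -> x \in level le S k -> y \in level le S j -> j < k.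
Proof using Hpo.
move=> lyx xk yj; rewrite ltnNge; apply/negP => kj.
have yr : y \in rest le S k by apply: (subsetP (rest_decr S kj)); apply: (subsetP (level_rest _ _)).
by move/minsP: xk => [_ /(_ y yr)]; rewrite lyx.
Qed.

Lemma level_le (S : {set T}) j k x y : le y x -> x \in level le S k -> y \in level le S j -> j <= k.
Proof using Hpo.
move=> lyx xk yj; case: (eqVneq y x) => [e|ne].
  by subst; rewrite (level_uniq yj xk).
by apply: ltnW; apply: (level_lt (x:=x) (y:=y) _ xk yj); rewrite lt_def ne.
Qed.

Lemma level_height (S : {set T}) k x : x \in level le S k -> k <= height le S.
Proof using Hpo.
move=> xk; have kT : k < #|T| by apply: (@rest_lt S); apply: (subsetP (level_rest _ _)) xk.
rewrite /height; have := @leq_bigmax_cond _ (fun i : 'I_#|T| => level le S i != set0) (fun i => i : nat) (Ordinal kT).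
apply => /=; apply/set0Pn; by exists x.
Qed.

Lemma mem_segment (S : {set T}) k l x :
  (x \in segment le S k l) = [exists i : 'I_#|T|.+1, [&& k <= i, i <= l & x \in level le S i]].
Proof using Hpo.
have memU : forall s, (x \in \big[@setU T/set0]_(i <- s) level le S i) = has (fun i => x \in level le S i) s.
  by elim => [|a s IH]; rewrite ?big_nil ?inE // big_cons inE IH.
rewrite /segment memU; apply/hasP/existsP => [[i]|[i /and3P[ki il xi]]].
  rewrite mem_index_iota ltnS => /andP[ki il] xi.
  have iT : i < #|T|.+1.
    apply: leq_trans (rest_lt (subsetP (level_rest _ _) _ xi)) _; exact: leqnSn.
  by exists (Ordinal iT); rewrite /= ki il xi.
by exists (i : nat) => //; rewrite mem_index_iota ki ltnS il.
Qed.

Lemma segmentP S k l x :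
  reflect (exists2 i, k <= i <= l & x \in level le S i) (x \in segment le S k l).
Proof using Hpo.
rewrite mem_segment; apply: (iffP existsP) => [[i /and3P[ki il xi]]|[i /andP[ki il] xi]].
  by exists i => //; rewrite ki il.
have iT : i < #|T|.+1.
  apply: leq_trans (rest_lt (subsetP (level_rest _ _) _ xi)) _; exact: leqnSn.
by exists (Ordinal iT); rewrite /= ki il xi.
Qed.

Lemma rest_rest (S : {set T}) k : rest le (rest le S 1) k = rest le S k.+1.
Proof using Hpo. by elim: k => [|k IH] //=; rewrite IH. Qed.

Definition upclosed (S U : {set T}) := forall u x, u \in U -> x \in S -> le u x -> x \in U.

Lemma minset_minus_up (S : {set T}) U : upclosed S U -> Defs.minset le (S :\: U) = Defs.minset le S :\: U.
Proof using Hpo.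
move=> up; apply/setP => x; rewrite in_setD; apply/minsP/andP => [[]|[xU /minsP[xS H]]].
  rewrite inE => /andP[xU xS] H; split => //; apply/minsP; split => // y yS.
  case: (boolP (y \in U)) => yU; last by apply: H; rewrite inE yU.
  by apply/negP => /ltW lyx; move/negP: xU; apply; apply: up lyx.
split; first by rewrite inE xU.
by move=> y; rewrite inE => /andP[_ ]; apply: H.
Qed.

Lemma rest_minus_up (S : {set T}) U k : upclosed S U -> rest le (S :\: U) k = rest le S k :\: U.
Proof using Hpo.
move=> up; elim: k => [|k IH] //=; rewrite IH minset_minus_up.
  by apply/setP => x; rewrite !inE; case: (x \in U); rewrite ?andbF.
move=> u x uU xr; apply: up uU _; exact: (subsetP (rest_sub S k)).
Qed.

Lemma minset_subset (X Y : {set T}) : X \subset Y -> Defs.minset le Y \subset X ->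
  Defs.minset le X = Defs.minset le Y.
Proof using Hpo.
move=> XY MX; apply/setP => x; apply/minsP/minsP => [[xX H]|[xY H]]; split.
- exact: (subsetP XY).
- move=> y yY; apply/negP => lyx.
  have [z zm lzy] := below_min yY.
  have zX : z \in X by apply: (subsetP MX).
  move/negP: (H z zX); apply; rewrite lt_def; apply/andP; split.
    apply/negP => /eqP e; subst z; move/minsP: zm => [_ /(_ y yY)]; by rewrite lyx.
  exact: le_trans lzy (ltW lyx).
- by apply: (subsetP MX); apply/minsP.
- by move=> y yX; apply: H; apply: (subsetP XY).
Qed.

End Gen.
Lemma uniq6 (T : eqType) (a b c d e f : T) : uniq [:: a;b;c;d;e;f] ->
  [/\ [/\ a != b, a != c, a != d, a != e & a != f], [/\ b != c, b != d, b != e & b != f],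
      [/\ c != d, c != e & c != f], d != e /\ d != f & e != f].
Proof.
rewrite /= !inE !negb_or => /and5P[/and5P[-> -> -> -> ->] /and4P[-> -> -> ->] /and3P[-> -> ->] /andP[-> ->] /andP[-> _]].
by [].
Qed.
Lemma uniq4 (T : eqType) (a b c d : T) :
  a != b -> a != c -> a != d -> b != c -> b != d -> c != d -> uniq [:: a;b;c;d].
Proof.
by move=> h1 h2 h3 h4 h5 h6; rewrite /= !inE !negb_or h1 h2 h3 h4 h5 h6.
Qed.

Section Seg.
Variables (T : finType) (le : rel T).
Hypothesis Hpo : is_poset le.
Hypothesis hQ1 : 0 < height le setT.
Hypothesis Hhor : horizon2 le.
Implicit Types S U : {set T}.

Let hQ := height le setT.
Let U := level le setT hQ.
Let P := segment le setT 1 hQ.-1.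

Lemma U_up : upclosed le setT U.
Proof.
move=> u x uU _ lux; case: (eqVneq u x) => [<-//|ne].
have [j xj] := level_ex Hpo (in_setT x).
have := level_lt Hpo (y:=u) (x:=x) _ xj uU; rewrite lt_def ne lux => /(_ isT) hj.
by have := level_height Hpo xj; rewrite leqNgt hj.
Qed.

Lemma P_eq : P = rest le setT 1 :\: U.
Proof.
apply/setP => x; rewrite in_setD; apply/(segmentP Hpo)/andP.
  case=> i /andP[i1 ih] xi; split.
    apply/negP => xU; have := level_uniq Hpo xi xU; move=> ei; move: ih; rewrite ei.
    by move: hQ1; rewrite -/hQ; case: hQ => // n _; rewrite ltnn.
  by apply: (subsetP (rest_decr Hpo _ i1)); apply: (subsetP (level_rest Hpo _ _)) xi.
case=> xU /=; rewrite inE => /andP[x0 _].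
have [i xi] := level_ex Hpo (in_setT x).
exists i => //; apply/andP; split.
  by case: i xi => // xi; rewrite xi in x0.
have := level_height Hpo xi; rewrite leq_eqVlt => /orP[/eqP e|].
  by rewrite -/hQ in e; subst i; rewrite xi in xU.
by move: hQ1; rewrite -/hQ; case: hQ => // n _; rewrite ltnS.
Qed.

Lemma P_level k x : x \in level le P k -> x \in level le setT k.+1.
Proof.
rewrite P_eq /level (rest_minus_up Hpo).
  by rewrite (rest_rest Hpo) (minset_minus_up Hpo) ?inE; [case/andP | move=> u y uU _; apply: U_up].
move=> u y uU yr; apply: U_up uU _ => //.
Qed.

Lemma P_hor k x y : 2 <= k -> x \in level le P 0 -> y \in level le P k -> lt le x y.
Proof.
move=> k2 /P_level x1 /P_level yk; apply: Hhor x1 yk; by rewrite !ltnS.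
Qed.

Let Pp := segment le P 2 (height le P).

Lemma Pp_lev x : x \in Pp -> exists2 k, 2 <= k & x \in level le P k.
Proof. by case/(segmentP Hpo) => k /andP[k2 _] xk; exists k. Qed.

Lemma Pp_P x : x \in Pp -> x \in P.
Proof. by case/Pp_lev => k _ /(level_S Hpo). Qed.

Lemma Pp_0 x : x \in Pp -> x \notin level le P 0.
Proof.
case/Pp_lev => k k2 xk; apply/negP => x0; have := level_uniq Hpo xk x0.
by move=> e; rewrite e in k2.
Qed.

Lemma Pp_or x : x \in P -> x \notin Pp -> (x \in level le P 0) || (x \in level le P 1).
Proof.
move=> xP; have [k xk] := level_ex Hpo xP.
case: k xk => [->//|[->|k xk]]; first by rewrite orbT.
case/negP; apply/(segmentP Hpo); exists k.+2 => //; by rewrite /= (level_height Hpo xk).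
Qed.

Lemma Pp_in x : x \in P -> x \notin level le P 0 -> x \notin level le P 1 -> x \in Pp.
Proof.
move=> xP n0 n1; apply/negPn/negP => nPp; have := Pp_or xP nPp.
by rewrite (negbTE n0) (negbTE n1).
Qed.

Lemma hor' x y : x \in level le P 0 -> y \in Pp -> lt le x y.
Proof. by move=> x0 /Pp_lev [k k2 yk]; apply: (P_hor k2). Qed.

Lemma Pp_notle x y : x \in Pp -> y \in P -> y \notin Pp -> ~~ le x y.
Proof.
move=> /Pp_lev [k k2 xk] yP yn; apply/negP => lxy.
have [j yj] := level_ex Hpo yP.
have := level_le Hpo lxy yj xk => kj.
case/negP: yn; apply/(segmentP Hpo); exists j => //; rewrite (level_height Hpo yj) andbT.
exact: leq_trans k2 kj.
Qed.

Lemma P0_ex x : x \in P -> exists2 c, c \in level le P 0 & le c x.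
Proof. by move=> xP; have [c cm lcx] := below_min Hpo xP; exists c. Qed.

Lemma F2 (x0 y0 x1 y1 x2 y2 : T) u0 u1 v :
  uniq [:: x0; y0; x1; y1; x2; y2] ->
  lt le u0 v = [|| (u0 == x0) && (v == y0), (u0 == x1) && (v == y1) | (u0 == x2) && (v == y2)] ->
  lt le u1 v = [|| (u1 == x0) && (v == y0), (u1 == x1) && (v == y1) | (u1 == x2) && (v == y2)] ->
  u0 != u1 -> lt le u0 v -> lt le u1 v -> False.
Proof.
move=> Hu -> -> ne h0 h1.
case/or3P: h0 => /andP[/eqP e1 /eqP e2]; case/or3P: h1 => /andP[/eqP e3 /eqP e4]; subst;
  move: Hu ne; rewrite /= !inE ?eqxx ?orbT /= ?andbF //.
Qed.

Lemma fwd (x0 y0 x1 y1 x2 y2 : T) :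
  uniq [:: x0; y0; x1; y1; x2; y2] ->
  level le P 0 :|: level le P 1 = [set x0; y0; x1; y1; x2; y2] ->
  {in level le P 0 :|: level le P 1 &, forall x y,
           lt le x y = [|| (x == x0) && (y == y0), (x == x1) && (y == y1)
                      | (x == x2) && (y == y2)]} ->
  (exists R, is_retract le P R /\ crown4 le (level le R 0 :|: level le R 1)) ->
  (exists T, is_retract le Pp T /\ antichain2 le (level le T 0)).
Proof.
move=> Hu HC Hlt [_ [[f [fP fmono fid ->]] [a0 [a1 [b0 [b1 [ua HA Hab]]]]]]].
set R := f @: P.
have RP : forall r, r \in R -> r \in P by move=> r /imsetP[p pP ->]; apply: fP.
have Rfix : forall r, r \in R -> f r = r by move=> r /imsetP[p pP ->]; apply: fid.
have inA : forall z, z \in [set a0; a1; b0; b1] -> z \in level le R 0 :|: level le R 1.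
  by move=> z; rewrite HA.
move: ua; rewrite /= !inE !negb_or => /and3P[/and3P[na01 na0b0 na0b1] /andP[na1b0 na1b1] /andP[nb01 _]].
have aAB : forall a, a \in [set a0; a1] -> a \notin [set b0; b1].
  move=> a; rewrite !inE => /orP[]/eqP->; rewrite negb_or ?na0b0 ?na0b1 ?na1b0 ?na1b1 //.
have bAB : forall b, b \in [set b0; b1] -> b \notin [set a0; a1].
  move=> b bB; apply/negP => bA; by move/negP: (aAB b bA).
have Ha : forall a, a \in [set a0; a1] -> a \in level le R 0.
  move=> a aA.
  have aA' : a \in [set a0; a1; b0; b1] by move: aA; rewrite !inE => /orP[]->; rewrite ?orbT.
  have := inA a aA'; rewrite in_setU => /orP[//|a1l]; exfalso.
  have aR := level_S Hpo a1l.
  have [z zm lz] := below_min Hpo aR.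
  have zm' : z \in level le R 0 := zm.
  have zA : z \in level le R 0 :|: level le R 1 by rewrite in_setU zm'.
  have aAl : a \in level le R 0 :|: level le R 1 by rewrite in_setU a1l orbT.
  have := Hab _ _ zA aAl; rewrite lt_def lz andbT.
  case: (eqVneq z a) => [e|_]; first by subst; have := level_uniq Hpo zm' a1l.
  by rewrite (negbTE (aAB a aA)) andbF.
have Hb : forall b, b \in [set b0; b1] -> b \in level le R 1.
  move=> b bB.
  have bA : b \in level le R 0 :|: level le R 1 by apply: inA; move: bB; rewrite !inE => /orP[]->; rewrite ?orbT.
  have a0A : a0 \in [set a0; a1] by rewrite !inE eqxx.
  have aA : a0 \in level le R 0 :|: level le R 1 by rewrite in_setU Ha.
  move: (bA); rewrite in_setU => /orP[b0l|//].
  have := Hab _ _ aA bA; rewrite a0A bB /= => lab.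
  move/(minsP Hpo): b0l => [_ /(_ a0)]; rewrite lab => H.
  by have := H (level_S Hpo (Ha a0 a0A)).
have L0 : forall z, z \in level le R 0 -> z \in [set a0; a1].
  move=> z zl; have zA : z \in [set a0; a1; b0; b1] by rewrite -HA in_setU zl.
  case: (boolP (z \in [set b0; b1])) => zB.
    by have := level_uniq Hpo zl (Hb z zB).
  by move: zA zB; rewrite !inE -!orbA => /or4P[]->; rewrite ?orbT.
have L1 : forall z, z \in level le R 1 -> z \in [set b0; b1].
  move=> z zl; have zA : z \in [set a0; a1; b0; b1] by rewrite -HA in_setU zl orbT.
  case: (boolP (z \in [set a0; a1])) => zB.
    by have := level_uniq Hpo zl (Ha z zB).
  by move: zA zB; rewrite !inE -!orbA => /or4P[]->; rewrite ?orbT.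
have hab : forall a b, a \in [set a0; a1] -> b \in [set b0; b1] -> lt le a b.
  move=> a b aA bB.
  have aA' : a \in level le R 0 :|: level le R 1 by rewrite in_setU Ha.
  have bB' : b \in level le R 0 :|: level le R 1 by rewrite in_setU Hb ?orbT.
  by rewrite (Hab a b aA' bB') aA bB.
have aR : forall x, x \in [set a0; a1] -> x \in R.
  by move=> x xA; apply: (level_S Hpo (Ha x xA)).
have bR : forall x, x \in [set b0; b1] -> x \in R.
  by move=> x xB; apply: (level_S Hpo (Hb x xB)).
have HbPp : forall b, b \in [set b0; b1] -> b \in Pp.
  move=> b bB; have bP := RP b (bR b bB).
  have a0A : a0 \in [set a0; a1] by rewrite !inE eqxx.
  have a1A : a1 \in [set a0; a1] by rewrite !inE eqxx orbT.
  apply: Pp_in bP _ _.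
    apply/negP => bl; move/(minsP Hpo): bl => [_ /(_ a0 (RP _ (aR a0 a0A)))].
    by rewrite hab.
  apply/negP => bl.
  have lev0 : forall a, a \in [set a0; a1] -> a \in level le P 0.
    move=> a aA; have [j aj] := level_ex Hpo (RP _ (aR a aA)).
    have := level_lt Hpo (hab a b aA bB) bl aj; rewrite ltnS leqn0 => /eqP e.
    by rewrite e in aj.
  have inC : forall z, z \in level le P 0 -> z \in level le P 0 :|: level le P 1.
    by move=> z zl; rewrite in_setU zl.
  have bC : b \in level le P 0 :|: level le P 1 by rewrite in_setU bl orbT.
  apply: (F2 (u0 := a0) (u1 := a1) (v := b) Hu _ _ na01 (hab _ _ a0A bB) (hab _ _ a1A bB)).
    by apply: Hlt => //; apply: inC; apply: lev0.
  by apply: Hlt => //; apply: inC; apply: lev0.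
have minR : forall a r, a \in [set a0; a1] -> r \in R -> le r a -> r = a.
  move=> a r aA rR lra; move/(minsP Hpo): (Ha a aA) => [_ /(_ r rR)].
  by rewrite lt_def lra andbT negbK => /eqP.
have other : forall a, a \in [set a0; a1] -> exists2 ao, ao \in [set a0; a1] & ao != a.
  move=> a; rewrite !inE => /orP[]/eqP->.
    by exists a1; rewrite ?inE ?eqxx ?orbT // eq_sym.
  by exists a0; rewrite ?inE ?eqxx ?orbT.
have fPp : forall y, y \in Pp -> f y \in Pp.
  move=> y yPp; have yP := Pp_P yPp.
  have fyR : f y \in R by apply: imset_f.
  have fyP := RP _ fyR.
  apply/negPn/negP => nfy.
  have fy0 : f y \in level le R 0.
    apply/negPn/negP => n0.
    have fyr1 : f y \in rest le R 1 by rewrite /= in_setD fyR andbT; exact: n0.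
    have [z zm lz] := below_min Hpo fyr1.
    have zPp := HbPp z (L1 z zm).
    by move/negP: (Pp_notle zPp fyP nfy); apply.
  have fyA := L0 _ fy0.
  have [ao aoA nao] := other _ fyA.
  have [c c0 lca] := P0_ex (RP _ (aR ao aoA)).
  have cP := level_S Hpo c0.
  have fcR : f c \in R by apply: imset_f.
  have e1 : f c = f y by apply: (minR _ _ fyA fcR); apply: fmono => //; apply: ltW; apply: hor'.
  have e2 : f c = ao by apply: (minR _ _ aoA fcR); rewrite -(Rfix ao (aR ao aoA)); apply: fmono => //; apply: RP; apply: aR.
  by move/negP: nao; apply; rewrite -e2 e1.
have Hsame : forall a ao, a \in [set a0; a1] -> ao \in [set a0; a1] -> a \in Pp -> ao \in Pp.
  move=> a ao aA aoA aPp; apply/negPn/negP => nao.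
  have [c c0 lca] := P0_ex (RP _ (aR ao aoA)).
  have cP := level_S Hpo c0.
  have fcR : f c \in R by apply: imset_f.
  have e1 : f c = a.
    apply: (minR _ _ aA fcR); rewrite -(Rfix a (aR a aA)); apply: fmono => //; first by apply: Pp_P.
    by apply: ltW; apply: hor'.
  have e2 : f c = ao by apply: (minR _ _ aoA fcR); rewrite -(Rfix ao (aR ao aoA)); apply: fmono => //; apply: RP; apply: aR.
  by move: aPp nao; rewrite -e1 e2 => ->.
have PpP : Pp \subset P by apply/subsetP => x /Pp_P.
have XR : f @: Pp \subset R by apply: imsetS.
exists (f @: Pp); split.
  exists f; split => //.
  - by move=> x y /Pp_P xP /Pp_P yP; apply: fmono.
  - by move=> x /Pp_P; apply: fid.
have a0A : a0 \in [set a0; a1] by rewrite !inE eqxx.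
have a1A : a1 \in [set a0; a1] by rewrite !inE eqxx orbT.
have b0B : b0 \in [set b0; b1] by rewrite !inE eqxx.
have b1B : b1 \in [set b0; b1] by rewrite !inE eqxx orbT.
have inLA : forall a, a \in [set a0; a1] -> a \in level le R 0 :|: level le R 1.
  by move=> a aA; rewrite in_setU Ha.
have inLB : forall b, b \in [set b0; b1] -> b \in level le R 0 :|: level le R 1.
  by move=> b bB; rewrite in_setU Hb ?orbT.
case: (boolP (a0 \in Pp)) => a0Pp.
  have a1Pp := Hsame _ _ a0A a1A a0Pp.
  have -> : level le (f @: Pp) 0 = level le R 0.
    apply: (minset_subset Hpo XR); apply/subsetP => z zm.
    have zA := L0 z zm; rewrite -(Rfix z (aR z zA)); apply: imset_f.
    by move: zA; rewrite !inE => /orP[]/eqP->.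
  exists a0, a1; split => //.
  - apply/setP => z; apply/idP/idP => [/L0 //|]; apply: Ha.
  - have := Hab a0 a1 (inLA a0 a0A) (inLA a1 a1A).
    by rewrite (negbTE (aAB a1 a1A)) andbF lt_def na01 /= => ->.
  - have := Hab a1 a0 (inLA a1 a1A) (inLA a0 a0A).
    by rewrite (negbTE (aAB a0 a0A)) andbF lt_def eq_sym na01 /= => ->.
have a1Pp : a1 \notin Pp by apply/negP => h1; move/negP: a0Pp; apply; exact: Hsame a1A a0A h1.
have -> : level le (f @: Pp) 0 = level le R 1.
  apply: (minset_subset Hpo); last first.
    apply/subsetP => z zm; have zB := L1 z zm; rewrite -(Rfix z (bR z zB)); apply: imset_f.
    exact: HbPp.
  apply/subsetP => x xX; rewrite /= in_setD (subsetP XR x xX) andbT.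
  apply/negP => xl0; have xA := L0 x xl0.
  case/imsetP: xX => p pPp e; have := fPp p pPp; rewrite -e.
  by move: xA; rewrite !inE => /orP[]/eqP->; rewrite ?(negbTE a0Pp) ?(negbTE a1Pp).
exists b0, b1; split => //.
- apply/setP => z; apply/idP/idP => [/L1 //|]; apply: Hb.
- have := Hab b0 b1 (inLB b0 b0B) (inLB b1 b1B).
  by rewrite (negbTE (bAB b0 b0B)) lt_def nb01 /= => ->.
- have := Hab b1 b0 (inLB b1 b1B) (inLB b0 b0B).
  by rewrite (negbTE (bAB b1 b1B)) lt_def eq_sym nb01 /= => ->.
Qed.

Lemma bwd (x0 y0 x1 y1 x2 y2 : T) :
  uniq [:: x0; y0; x1; y1; x2; y2] ->
  level le P 0 :|: level le P 1 = [set x0; y0; x1; y1; x2; y2] ->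
  {in level le P 0 :|: level le P 1 &, forall x y,
           lt le x y = [|| (x == x0) && (y == y0), (x == x1) && (y == y1)
                      | (x == x2) && (y == y2)]} ->
  (exists T, is_retract le Pp T /\ antichain2 le (level le T 0)) ->
  (exists R, is_retract le P R /\ crown4 le (level le R 0 :|: level le R 1)).
Proof.
move=> Hu HC Hlt [_ [[g [gP gmono gid ->]] [t0 [t1 [nt01 HT nle01 nle10]]]]].
set X := g @: Pp.
have XPp : forall x, x \in X -> x \in Pp by move=> x /imsetP[p pP ->]; apply: gP.
have [[nx0y0 nx0x1 nx0y1 nx0x2 nx0y2] [ny0x1 ny0y1 ny0x2 ny0y2] [nx1y1 nx1x2 nx1y2]
      [ny1x2 ny1y2] nx2y2] := uniq6 Hu.
set C := level le P 0 :|: level le P 1.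
have inC : forall z, z \in [set x0; y0; x1; y1; x2; y2] -> z \in C by move=> z; rewrite /C HC.
have x0C : x0 \in C by apply: inC; rewrite !inE eqxx.
have x1C : x1 \in C by apply: inC; rewrite !inE eqxx ?orbT.
have x0X : x0 \in [set x0; x1] by rewrite !inE eqxx.
have x1X : x1 \in [set x0; x1] by rewrite !inE eqxx orbT.
have ltx : forall w z, w \in C -> z \in [set x0; x1] -> lt le w z = false.
  move=> w z wC; rewrite !inE => /orP[]/eqP zE; rewrite Hlt // ?zE ?x0C ?x1C //.
    by rewrite (negbTE nx0y0) (negbTE nx0y1) (negbTE nx0y2) !andbF.
  by rewrite [x1 == y0]eq_sym (negbTE ny0x1) (negbTE nx1y1) (negbTE nx1y2) !andbF.
have X0 : forall z, z \in [set x0; x1] -> z \in level le P 0.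
  move=> z zX; have zC : z \in C by move: zX; rewrite in_set2 => /orP[]/eqP->.
  move: (zC); rewrite in_setU => /orP[//|z1].
  have [c cm lcz] := below_min Hpo (level_S Hpo z1).
  have cm' : c \in level le P 0 := cm.
  have cC : c \in C by rewrite in_setU cm'.
  case: (eqVneq c z) => [e|ne]; first by rewrite -e.
  by have := ltx c z cC zX; rewrite lt_def ne lcz.
have xnPp : forall z, z \in [set x0; x1] -> z \notin Pp.
  by move=> z zX; apply/negP => /Pp_0; rewrite X0.
pose f x := if x \in Pp then g x else if (x == x0) || (x == y0) then x0 else x1.
have fPp : forall x, x \in Pp -> f x = g x by move=> x xP; rewrite /f xP.
have fnPp : forall x, x \notin Pp -> f x \in [set x0; x1].
  by move=> x xP; rewrite /f (negbTE xP); case: ifP; rewrite !inE eqxx ?orbT.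
have fx : forall z, z \in [set x0; x1] -> f z = z.
  move=> z zX; rewrite /f (negbTE (xnPp z zX)); move: zX; rewrite !inE => /orP[]/eqP->.
    by rewrite eqxx.
  by rewrite eq_sym (negbTE nx0x1) eq_sym (negbTE ny0x1).
have fP : {in P, forall x, f x \in P}.
  move=> x xP; case: (boolP (x \in Pp)) => xPp; first by rewrite fPp //; apply: Pp_P; apply: gP.
  by apply: (level_S Hpo); apply: X0; apply: fnPp.
have fmono : {in P &, forall x y, le x y -> le (f x) (f y)}.
  move=> x y xP yP lxy; case: (boolP (x \in Pp)) => xPp; case: (boolP (y \in Pp)) => yPp.
  - by rewrite !fPp //; apply: gmono.
  - by move/negP: (Pp_notle xPp yP yPp).
  - by rewrite (fPp y yPp); apply: ltW; apply: (hor' (X0 _ (fnPp x xPp)) (gP y yPp)).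
  case: (eqVneq x y) => [<-|ne]; first exact: (le_refl Hpo).
  have xC : x \in C by rewrite /C in_setU; exact: Pp_or xP xPp.
  have yC : y \in C by rewrite /C in_setU; exact: Pp_or yP yPp.
  have := Hlt x y xC yC; rewrite lt_def ne lxy /= => /esym.
  rewrite /f (negbTE xPp) (negbTE yPp).
  case/or3P => /andP[/eqP-> /eqP->].
  - by rewrite eqxx /= ?eqxx ?orbT; exact: (le_refl Hpo).
  - rewrite [x1 == x0]eq_sym (negbTE nx0x1) [x1 == y0]eq_sym (negbTE ny0x1).
    rewrite [y1 == x0]eq_sym (negbTE nx0y1) [y1 == y0]eq_sym (negbTE ny0y1) /=; exact: (le_refl Hpo).
    rewrite [x2 == x0]eq_sym (negbTE nx0x2) [x2 == y0]eq_sym (negbTE ny0x2).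
    rewrite [y2 == x0]eq_sym (negbTE nx0y2) [y2 == y0]eq_sym (negbTE ny0y2) /=; exact: (le_refl Hpo).
have fid : {in P, forall x, f (f x) = f x}.
  move=> x xP; case: (boolP (x \in Pp)) => xPp.
    by rewrite !fPp ?gid //; apply: gP.
  by rewrite fx //; apply: fnPp.
exists (f @: P); split; first by exists f.
set R := f @: P.
have RE : R = [set x0; x1] :|: X.
  apply/setP => z; rewrite in_setU; apply/imsetP/orP => [[p pP ->]|[zX|/imsetP[p pPp ->]]].
  - case: (boolP (p \in Pp)) => pPp; last by left; apply: fnPp.
    by right; rewrite fPp //; apply: imset_f.
  - by exists z; rewrite ?fx //; apply: (level_S Hpo); apply: X0.
  - by exists p; rewrite ?fPp //; apply: Pp_P.
have L0 : level le R 0 = [set x0; x1].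
  apply/setP => z; apply/(minsP Hpo)/idP => [[zR H]|zX].
    move: zR; rewrite /= RE in_setU => /orP[//|zX]; exfalso.
    have x0R : x0 \in R by rewrite RE in_setU x0X.
    move/negP: (H x0 x0R); apply.
    exact: (hor' (X0 _ x0X) (XPp _ zX)).
  split; first by rewrite RE in_setU zX.
  move=> w; rewrite RE in_setU => /orP[wX|wX].
    by rewrite ltx //; rewrite in_setU X0.
  apply/negP => /ltW; apply/negP; apply: Pp_notle (XPp w wX) _ (xnPp z zX).
  exact: (level_S Hpo (X0 z zX)).
have RX : R :\: [set x0; x1] = X.
  apply/setP => z; rewrite in_setD RE [z \in _ :|: X]in_setU.
  case: (boolP (z \in [set x0; x1])) => zX /=; last by [].
  apply/esym/negP => /XPp; apply/negP; exact: xnPp.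
have L1 : level le R 1 = [set t0; t1].
  change (Defs.minset le (R :\: level le R 0) = [set t0; t1]); rewrite L0 RX; exact: HT.
have tX : forall t, t \in [set t0; t1] -> t \in X.
  by move=> t tT; rewrite -HT in tT; apply: (level_S Hpo tT).
have tnX : forall t, t \in [set t0; t1] -> t \notin [set x0; x1].
  move=> t /tX /XPp tPp; apply/negP => tx; by move/negP: (xnPp t tx).
have t0T : t0 \in [set t0; t1] by rewrite !inE eqxx.
have t1T : t1 \in [set t0; t1] by rewrite !inE eqxx orbT.
have neqxt : forall x t, x \in [set x0; x1] -> t \in [set t0; t1] -> x != t.
  by move=> x t xX tT; apply/negP => /eqP e; move/negP: (tnX t tT); apply; rewrite -e.
exists x0, x1, t0, t1; split.
- apply: uniq4 => //; try by apply: neqxt.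
- by rewrite L0 L1; apply/setP => z; rewrite !inE -!orbA.
rewrite L0 L1 => u v; rewrite in_setU => /orP[uX|uT]; rewrite in_setU => /orP[vX|vT].
- have vnT : v \notin [set t0; t1] by apply/negP => vT'; move/negP: (tnX v vT'); apply.
  by rewrite (negbTE vnT) andbF ltx // in_setU X0.
- rewrite uX vT /=; apply: hor'; [exact: X0 | exact: XPp (tX v vT)].
- rewrite (negbTE (tnX u uT)) /=; apply/negP => /ltW; apply/negP.
  apply: Pp_notle (XPp u (tX u uT)) _ (xnPp v vX); exact: (level_S Hpo (X0 v vX)).
rewrite (negbTE (tnX u uT)) /= lt_def.
case: (eqVneq u v) => [//|ne] /=.
move: uT vT ne; rewrite !inE => /orP[]/eqP-> /orP[]/eqP->; rewrite ?eqxx //= => _.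
  exact: negbTE.
exact: negbTE.
Qed.

End Seg.

Unset Implicit Arguments.

(* Q ranges over N_2 (carrier the c_{k,j}, order le);
   P = Q(1 -> h_Q - 1) ranges over N_2^Seg. *)
Theorem corollary4p6 (h : nat) (le : rel (sec_carrier h)) :
  in_N2 le ->
  let P := segment le setT 1 (height le setT).-1 in
  2 <= height le P ->
  type3C le (level le P 0 :|: level le P 1) ->
  (exists R, is_retract le P R /\ crown4 le (level le R 0 :|: level le R 1)) <->
  (exists T, is_retract le (segment le P 2 (height le P)) T /\
             antichain2 le (level le T 0)).
Proof.
move=> [[[Hpo _ Hh] _] _ h2 Hhor] P _ [x0 [y0 [x1 [y1 [x2 [y2 [Hu HC Hlt]]]]]]].
have hQ1 : 0 < height le setT by rewrite Hh; apply: leq_trans h2.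
split.
  exact: (fwd Hpo hQ1 Hhor Hu HC Hlt).
exact: (bwd Hpo hQ1 Hhor Hu HC Hlt).
Qed.
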